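(* Let $u_t+uu_x=A^2(t,x)u_{xx}+A^1(t,x)u_x$ be an equation of the class $\hat{\mathcal L}_1$ and let $\mathfrak g_\kappa$ be its maximal Lie invariance algebra. Then $\mathfrak g_\kappa$ consists of the vector fields of the form $Q=D(\tau)+\alpha S^1+\beta S^0+P(\chi)$, where \[ D(\tau)=\tau\partial_t+\tau_tx\partial_x,\quad S^1=x\partial_x+u\partial_u,\quad S^0=\partial_u,\quad P(\chi)=\chi\partial_x, \] $\alpha,\beta$ are constants and $\tau,\chi$ are smooth functions of $t$ satisfying the classifying equations \[ \tau A^2_t+\big((\tau_t+\alpha)x+\chi\big)A^2_x=(\tau_t+2\alpha)A^2, \] \[ \tau A^1_t+\big((\tau_t+\alpha)x+\chi\big)A^1_x=\alpha A^1-\tau_{tt}x-\chi_t+\beta. \]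
   Context: All functions are smooth. $\hat{\mathcal L}_1$ denotes the class of equations $u_t+uu_x=A^2(t,x)u_{xx}+A^1(t,x)u_x$ for $u(t,x)$ with arbitrary elements $A^1,A^2$ smooth functions of $(t,x)$ with $A^2\neq0$ and $A^1_{xx}\neq0$ (superscripts are indices). The maximal Lie invariance algebra of an equation is the Lie algebra of all vector fields on the space $(t,x,u)$ that generate one-parameter groups of point symmetries of the equation. *)

(* Defs.v *)
From Stdlib Require Import Reals List.
From Coquelicot Require Import Coquelicot.
Open Scope R_scope.

Definition smooth1 (f : R -> R) : Prop := forall (n : nat) (t : R), ex_derive_n f n t.

Definition pd_t2 (f : R -> R -> R) : R -> R -> R :=
  fun t x => Derive (fun s => f s x) t.
Definition pd_x2 (f : R -> R -> R) : R -> R -> R :=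
  fun t x => Derive (fun s => f t s) x.

(* iterated partial derivatives; [true] = d/dt, [false] = d/dx *)
Fixpoint ipd2 (l : list bool) (f : R -> R -> R) : R -> R -> R :=
  match l with
  | nil => f
  | b :: l' => if b then pd_t2 (ipd2 l' f) else pd_x2 (ipd2 l' f)
  end.

Definition smooth2 (f : R -> R -> R) : Prop :=
  forall l : list bool,
    (forall t x, ex_derive (fun s => ipd2 l f s x) t /\
                 ex_derive (fun s => ipd2 l f t s) x) /\
    (forall t x, continuous (fun p : R * R => ipd2 l f (fst p) (snd p)) (t, x)).

Definition pd_t (f : R -> R -> R -> R) : R -> R -> R -> R :=
  fun t x u => Derive (fun s => f s x u) t.
Definition pd_x (f : R -> R -> R -> R) : R -> R -> R -> R :=
  fun t x u => Derive (fun s => f t s u) x.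
Definition pd_u (f : R -> R -> R -> R) : R -> R -> R -> R :=
  fun t x u => Derive (fun s => f t x s) u.

Inductive dir3 := Dt | Dx | Du.

Definition pd3 (d : dir3) : (R -> R -> R -> R) -> R -> R -> R -> R :=
  match d with Dt => pd_t | Dx => pd_x | Du => pd_u end.

Fixpoint ipd3 (l : list dir3) (f : R -> R -> R -> R) : R -> R -> R -> R :=
  match l with
  | nil => f
  | d :: l' => pd3 d (ipd3 l' f)
  end.

Definition smooth3 (f : R -> R -> R -> R) : Prop :=
  forall l : list dir3,
    (forall t x u, ex_derive (fun s => ipd3 l f s x u) t /\
                   ex_derive (fun s => ipd3 l f t s u) x /\
                   ex_derive (fun s => ipd3 l f t x s) u) /\
    (forall t x u,
        continuous (fun p : R * R * R => ipd3 l f (fst (fst p)) (snd (fst p)) (snd p))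
                   (t, x, u)).

(* Total derivatives on the second-order jet space with coordinates
   (t,x,u,ut,ux,utt,utx,uxx), for f = f(t,x,u). *)
Definition Dt_tot (f : R -> R -> R -> R) (t x u ut : R) : R :=
  pd_t f t x u + ut * pd_u f t x u.
Definition Dx_tot (f : R -> R -> R -> R) (t x u ux : R) : R :=
  pd_x f t x u + ux * pd_u f t x u.
Definition Dxx_tot (f : R -> R -> R -> R) (t x u ux uxx : R) : R :=
  pd_x (pd_x f) t x u + 2 * ux * pd_u (pd_x f) t x u
  + ux ^ 2 * pd_u (pd_u f) t x u + uxx * pd_u f t x u.

Definition eta_T (tau xi eta : R -> R -> R -> R) (t x u ut ux : R) : R :=
  Dt_tot eta t x u ut - ut * Dt_tot tau t x u ut - ux * Dt_tot xi t x u ut.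
Definition eta_X (tau xi eta : R -> R -> R -> R) (t x u ut ux : R) : R :=
  Dx_tot eta t x u ux - ut * Dx_tot tau t x u ux - ux * Dx_tot xi t x u ux.
Definition eta_XX (tau xi eta : R -> R -> R -> R) (t x u ut ux utx uxx : R) : R :=
  Dxx_tot eta t x u ux uxx - 2 * utx * Dx_tot tau t x u ux
  - ut * Dxx_tot tau t x u ux uxx - 2 * uxx * Dx_tot xi t x u ux
  - ux * Dxx_tot xi t x u ux uxx.

Definition Delta (A1 A2 : R -> R -> R) (t x u ut ux uxx : R) : R :=
  ut + u * ux - A2 t x * uxx - A1 t x * ux.

Definition pr2Q_Delta (A1 A2 : R -> R -> R) (tau xi eta : R -> R -> R -> R)
    (t x u ut ux utx uxx : R) : R :=
  eta_T tau xi eta t x u ut ux + eta t x u * ux + u * eta_X tau xi eta t x u ut ux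
  - (tau t x u * pd_t2 A2 t x + xi t x u * pd_x2 A2 t x) * uxx
  - A2 t x * eta_XX tau xi eta t x u ut ux utx uxx
  - (tau t x u * pd_t2 A1 t x + xi t x u * pd_x2 A1 t x) * ux
  - A1 t x * eta_X tau xi eta t x u ut ux.

(* Q = tau d_t + xi d_x + eta d_u (smooth coefficients on (t,x,u)-space) belongs
   to the maximal Lie invariance algebra of the equation: infinitesimal
   invariance criterion  pr^(2)Q(Delta) = 0  whenever  Delta = 0. *)
Definition in_max_Lie_inv_alg (A1 A2 : R -> R -> R) (tau xi eta : R -> R -> R -> R) : Prop :=
  smooth3 tau /\ smooth3 xi /\ smooth3 eta /\
  forall t x u ut ux utx uxx : R,
    Delta A1 A2 t x u ut ux uxx = 0 ->
    pr2Q_Delta A1 A2 tau xi eta t x u ut ux utx uxx = 0.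

Definition in_class_L1hat (A1 A2 : R -> R -> R) : Prop :=
  smooth2 A1 /\ smooth2 A2 /\
  (forall t x, A2 t x <> 0) /\
  (forall t x, pd_x2 (pd_x2 A1) t x <> 0).

(* Main.v *)
Require Import Defs.
From Stdlib Require Import Reals Lra Lia FunctionalExtensionality List.
From Coquelicot Require Import Coquelicot.
Open Scope R_scope.

Lemma const_fun (f : R -> R) :
  (forall s, ex_derive f s) -> (forall s, Derive f s = 0) -> forall a b, f a = f b.
Proof.
  intros Hd H0 a b.
  destruct (MVT_abs f (Derive f) a b) as [c [Hc _]].
  - intros c _. apply is_derive_Reals. apply Derive_correct, Hd.
  - rewrite H0, Rabs_R0, Rmult_0_l in Hc.
    assert (f a - f b = 0). { apply Rabs_eq_0. rewrite Rabs_minus_sym. exact Hc. }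
    lra.
Qed.

Lemma Derive_lin (c d x : R) : Derive (fun s => c * s + d) x = c.
Proof. apply is_derive_unique. auto_derive; auto; ring. Qed.

Lemma Derive_lin2 (p q : R -> R) (u x : R) :
  ex_derive p x -> ex_derive q x ->
  Derive (fun s => p s * u + q s) x = Derive p x * u + Derive q x.
Proof.
  intros Hp Hq. apply is_derive_unique.
  auto_derive. repeat split; auto. change (fun x0 => p x0) with p. change (fun x0 => q x0) with q. ring.
Qed.

Definition aff (p q : R -> R) (c : R) : R -> R -> R -> R :=
  fun t x u => p t + q t * x + c * u.

Lemma smooth1_D (p : R -> R) : smooth1 p -> smooth1 (Derive p).
Proof.
  intros Hp n t.
  assert (E : forall k, Derive_n (Derive p) k = Derive_n p (S k)).
  { intro k. apply functional_extensionality. intro y.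
    change (Derive p) with (Derive_n p 1).
    rewrite Derive_n_comp. f_equal. lia. }
  destruct n as [|n]. exact I.
  simpl. rewrite E. exact (Hp (S (S n)) t).
Qed.

Lemma smooth1_ex (p : R -> R) : smooth1 p -> forall t, ex_derive p t.
Proof. intros Hp t. exact (Hp 1%nat t). Qed.

Lemma smooth1_const (c : R) : smooth1 (fun _ => c).
Proof. intros n t. apply ex_derive_n_const. Qed.

Lemma pd_t_aff p q c : (forall t, ex_derive p t) -> (forall t, ex_derive q t) ->
  pd_t (aff p q c) = aff (Derive p) (Derive q) 0.
Proof.
  intros Hp Hq. unfold pd_t, aff.
  do 3 (apply functional_extensionality; intro).
  apply is_derive_unique.
  auto_derive. repeat split; auto. change (fun x => p x) with p. change (fun x => q x) with q. ring.
Qed.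

Lemma pd_x_aff p q c : pd_x (aff p q c) = aff q (fun _ => 0) 0.
Proof.
  unfold pd_x, aff. do 3 (apply functional_extensionality; intro).
  apply is_derive_unique. auto_derive; auto. ring.
Qed.

Lemma pd_u_aff p q c : pd_u (aff p q c) = aff (fun _ => c) (fun _ => 0) 0.
Proof.
  unfold pd_u, aff. do 3 (apply functional_extensionality; intro).
  apply is_derive_unique. auto_derive; auto. ring.
Qed.

Lemma aff_closed : forall l p q c, smooth1 p -> smooth1 q ->
  exists p' q' c', smooth1 p' /\ smooth1 q' /\ ipd3 l (aff p q c) = aff p' q' c'.
Proof.
  induction l as [|d l IH]; intros p q c Hp Hq.
  - exists p, q, c. auto.
  - destruct (IH p q c Hp Hq) as [p' [q' [c' [Hp' [Hq' E]]]]].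
    simpl. rewrite E. destruct d; simpl.
    + exists (Derive p'), (Derive q'), 0. split; [|split].
      apply smooth1_D; auto. apply smooth1_D; auto.
      apply pd_t_aff; apply smooth1_ex; auto.
    + exists q', (fun _ => 0), 0. split; [|split]; auto. apply smooth1_const.
      apply pd_x_aff.
    + exists (fun _ => c'), (fun _ => 0), 0. split; [|split]; try apply smooth1_const.
      apply pd_u_aff.
Qed.

Lemma smooth3_aff p q c : smooth1 p -> smooth1 q -> smooth3 (aff p q c).
Proof.
  intros Hp Hq l.
  destruct (aff_closed l p q c Hp Hq) as [p' [q' [c' [Hp' [Hq' E]]]]].
  rewrite E. unfold aff. split.
  - intros t x u. split; [|split].
    + auto_derive. repeat split; apply smooth1_ex; auto.
    + auto_derive; auto.
    + auto_derive; auto.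
  - intros t x u.
    apply (@continuous_plus _ R_AbsRing R_NormedModule (fun p : R*R*R => p' (fst (fst p)) + q' (fst (fst p)) * snd (fst p))
                           (fun p : R*R*R => c' * snd p)).
    apply (@continuous_plus _ R_AbsRing R_NormedModule (fun p : R*R*R => p' (fst (fst p)))
                           (fun p : R*R*R => q' (fst (fst p)) * snd (fst p))).
    + apply (continuous_comp (fun p : R*R*R => fst (fst p)) p').
      apply (continuous_comp (fun p : R*R*R => fst p) fst).
      apply continuous_fst. apply continuous_fst.
      apply (@ex_derive_continuous R_AbsRing R_NormedModule). apply smooth1_ex; auto.
    + apply (@continuous_mult _ R_AbsRing (fun p : R*R*R => q' (fst (fst p))) (fun p : R*R*R => snd (fst p))).
      apply (continuous_comp (fun p : R*R*R => fst (fst p)) q').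
      apply (continuous_comp (fun p : R*R*R => fst p) fst).
      apply continuous_fst. apply continuous_fst.
      apply (@ex_derive_continuous R_AbsRing R_NormedModule). apply smooth1_ex; auto.
      apply (continuous_comp (fun p : R*R*R => fst p) snd).
      apply continuous_fst. apply continuous_snd.
    + apply (@continuous_mult _ R_AbsRing (fun _ : R*R*R => c') (fun p : R*R*R => snd p)).
      apply continuous_const. apply continuous_snd.
Qed.

Lemma reverse_dir (A1 A2 : R -> R -> R) alpha beta T chi :
  smooth1 T -> smooth1 chi ->
  (forall t x,
     T t * pd_t2 A2 t x + ((Derive T t + alpha) * x + chi t) * pd_x2 A2 t x
     = (Derive T t + 2 * alpha) * A2 t x) ->
  (forall t x,
     T t * pd_t2 A1 t x + ((Derive T t + alpha) * x + chi t) * pd_x2 A1 t x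
     = alpha * A1 t x - Derive (Derive T) t * x - Derive chi t + beta) ->
  in_max_Lie_inv_alg A1 A2 (aff T (fun _ => 0) 0)
     (aff chi (fun t => Derive T t + alpha) 0) (aff (fun _ => beta) (fun _ => 0) alpha).
Proof.
  intros HT Hc E2 E1.
  assert (HT1 : smooth1 (fun t => Derive T t + alpha)).
  { intros n t. apply ex_derive_n_ext with (f := fun t => alpha + Derive T t).
    intros; ring.
    apply ex_derive_n_plus.
    exists (mkposreal 1 Rlt_0_1); intros; apply ex_derive_n_const.
    exists (mkposreal 1 Rlt_0_1); intros; apply smooth1_D; auto. }
  assert (HDD : forall t, Derive (fun t => Derive T t + alpha) t = Derive (Derive T) t).
  { intro t. apply is_derive_unique. auto_derive.
    apply smooth1_ex, smooth1_D; auto. change (fun x => Derive T x) with (Derive T). ring. }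
  split; [apply smooth3_aff; auto; apply smooth1_const|].
  split; [apply smooth3_aff; auto|].
  split; [apply smooth3_aff; apply smooth1_const|].
  intros t x u ut ux utx uxx HD.
  unfold Defs.Delta in HD.
  unfold pr2Q_Delta, eta_T, eta_X, eta_XX, Dt_tot, Dx_tot, Dxx_tot.
  rewrite !pd_t_aff; try (apply smooth1_ex; auto; apply smooth1_const).
  rewrite !pd_x_aff, !pd_u_aff.
  unfold aff. rewrite HDD, !Derive_const.
  specialize (E2 t x). specialize (E1 t x).
  assert (Hut : ut = - u * ux + A2 t x * uxx + A1 t x * ux) by lra.
  subst ut.
  pose proof (f_equal (fun z => z * uxx) E2) as E2'.
  pose proof (f_equal (fun z => z * ux) E1) as E1'.
  simpl in E2', E1'.
  lra.
Qed.

Lemma ex_t f l : smooth3 f -> forall t x u, ex_derive (fun s => ipd3 l f s x u) t.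
Proof. intros S t x u. exact (proj1 (proj1 (S l) t x u)). Qed.
Lemma ex_x f l : smooth3 f -> forall t x u, ex_derive (fun s => ipd3 l f t s u) x.
Proof. intros S t x u. exact (proj1 (proj2 (proj1 (S l) t x u))). Qed.
Lemma ex_u f l : smooth3 f -> forall t x u, ex_derive (fun s => ipd3 l f t x s) u.
Proof. intros S t x u. exact (proj2 (proj2 (proj1 (S l) t x u))). Qed.

Lemma mul_nz a b : a <> 0 -> a * b = 0 -> b = 0.
Proof. intros Ha H. destruct (Rmult_integral _ _ H); auto. contradiction. Qed.

Lemma lin_of_deriv (g : R -> R) (c : R) :
  (forall s, ex_derive g s) -> (forall s, Derive g s = c) -> forall s, g s = c * s + g 0.
Proof.
  intros Hd Hc s.
  assert (K := const_fun (fun s => g s - c * s)).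
  assert (E : (fun s => g s - c * s) s = (fun s => g s - c * s) 0).
  { apply K.
    - intro y. apply (ex_derive_minus g (fun s => c * s)); auto. auto_derive; auto.
    - intro y. rewrite (Derive_minus g (fun s => c * s)); auto.
      + rewrite Hc. replace (Derive _ y) with c. ring.
        symmetry. apply is_derive_unique. auto_derive; auto; ring.
      + auto_derive; auto. }
  simpl in E. lra.
Qed.

Lemma smooth1_of3 f : smooth3 f -> smooth1 (fun t => f t 0 0).
Proof.
  intros S.
  assert (K : forall k y, Derive_n (fun t => f t 0 0) k y = ipd3 (repeat Dt k) f y 0 0).
  { induction k as [|k IH]; intro y. reflexivity.
    simpl. apply Derive_ext. exact IH. }
  intros n t. destruct n as [|n]. exact I.
  simpl. apply (ex_derive_ext (fun s => ipd3 (repeat Dt n) f s 0 0)).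
  intro; symmetry; apply K.
  apply (ex_t f (repeat Dt n) S).
Qed.

Lemma pdx_zero f : (forall t x u, f t x u = 0) -> forall t x u, pd_x f t x u = 0.
Proof. intros H t x u. unfold pd_x. rewrite (Derive_ext _ (fun _ => 0)); auto. apply Derive_const. Qed.
Lemma pdu_zero f : (forall t x u, f t x u = 0) -> forall t x u, pd_u f t x u = 0.
Proof. intros H t x u. unfold pd_u. rewrite (Derive_ext _ (fun _ => 0)); auto. apply Derive_const. Qed.

Definition Tof (tau : R -> R -> R -> R) t := tau t 0 0.
Definition Xof (xi : R -> R -> R -> R) t x := xi t x 0.
Definition Fof (eta : R -> R -> R -> R) t x := pd_u eta t x 0.
Definition Gof (eta : R -> R -> R -> R) t x := eta t x 0.

Ltac inst HE t x u a b c n :=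
  pose proof (HE t x u a b c) as n;
  unfold pr2Q_Delta, eta_T, eta_X, eta_XX, Dt_tot, Dx_tot, Dxx_tot in n.

Lemma forward (A1 A2 : R -> R -> R) tau xi eta :
  in_class_L1hat A1 A2 -> in_max_Lie_inv_alg A1 A2 tau xi eta ->
    exists (alpha beta : R) (T chi : R -> R),
      smooth1 T /\ smooth1 chi /\
      (forall t x u,
          tau t x u = T t /\
          xi t x u = Derive T t * x + alpha * x + chi t /\
          eta t x u = alpha * u + beta) /\
      (forall t x,
          T t * pd_t2 A2 t x + ((Derive T t + alpha) * x + chi t) * pd_x2 A2 t x
          = (Derive T t + 2 * alpha) * A2 t x) /\
      (forall t x,
          T t * pd_t2 A1 t x + ((Derive T t + alpha) * x + chi t) * pd_x2 A1 t x
          = alpha * A1 t x - Derive (Derive T) t * x - Derive chi t + beta).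
Proof.
  intros [_ [_ [HA2 HA1]]] [St [Sx [Se H]]].
  assert (HE : forall t x u ux utx uxx,
    pr2Q_Delta A1 A2 tau xi eta t x u (- u * ux + A2 t x * uxx + A1 t x * ux) ux utx uxx = 0).
  { intros. apply H. unfold Defs.Delta. ring. }
  clear H.
  assert (S1 : forall t x u, pd_x tau t x u = 0 /\ pd_u tau t x u = 0).
  { intros t x u.
    inst HE t x u 0 0 0 e0. inst HE t x u 0 1 0 e1.
    inst HE t x u 1 0 0 e2. inst HE t x u 1 1 0 e3.
    split; apply (mul_nz (A2 t x)); auto; lra. }
  assert (Tx : forall t x u, pd_x tau t x u = 0) by apply S1.
  assert (Tu : forall t x u, pd_u tau t x u = 0) by apply S1.
  clear S1.
  assert (Htau : forall t x u, tau t x u = Tof tau t).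
  { intros t x u. unfold Tof.
    rewrite (const_fun (fun s => tau t x s) (ex_u tau nil St t x) (Tu t x) u 0).
    exact (const_fun (fun s => tau t s 0) (fun s => ex_x tau nil St t s 0) (fun s => Tx t s 0) x 0). }
  assert (Tt : forall t x u, pd_t tau t x u = Derive (Tof tau) t).
  { intros. unfold pd_t. apply Derive_ext. intro; apply Htau. }
  assert (Txx := pdx_zero _ Tx). assert (Tux := pdu_zero _ Tx). assert (Tuu := pdu_zero _ Tu).
  assert (Xu : forall t x u, pd_u xi t x u = 0).
  { intros t x u.
    inst HE t x u 0 0 0 e0. inst HE t x u 0 0 1 e1.
    inst HE t x u 1 0 0 e2. inst HE t x u 1 0 1 e3.
    rewrite ?Tx, ?Tu, ?Txx, ?Tux, ?Tuu, ?Tt in e0, e1, e2, e3.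
    apply (mul_nz (A2 t x)); auto; lra. }
  assert (Hxi : forall t x u, xi t x u = Xof xi t x).
  { intros t x u. unfold Xof.
    exact (const_fun (fun s => xi t x s) (ex_u xi nil Sx t x) (Xu t x) u 0). }
  assert (Xt : forall t x u, pd_t xi t x u = pd_t2 (Xof xi) t x).
  { intros. unfold pd_t, pd_t2. apply Derive_ext. intro; apply Hxi. }
  assert (Xx : forall t x u, pd_x xi t x u = pd_x2 (Xof xi) t x).
  { intros. unfold pd_x, pd_x2. apply Derive_ext. intro; apply Hxi. }
  assert (Xxx : forall t x u, pd_x (pd_x xi) t x u = pd_x2 (pd_x2 (Xof xi)) t x).
  { intros. unfold pd_x at 1. unfold pd_x2 at 1. apply Derive_ext. intro; apply Xx. }
  assert (Xux : forall t x u, pd_u (pd_x xi) t x u = 0).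
  { intros. unfold pd_u. rewrite (Derive_ext _ (fun _ => pd_x2 (Xof xi) t x)).
    apply Derive_const. intro; apply Xx. }
  assert (Xuu := pdu_zero _ Xu).
  assert (Euu : forall t x u, pd_u (pd_u eta) t x u = 0).
  { intros t x u.
    inst HE t x u 0 0 0 e0. inst HE t x u 1 0 0 e1. inst HE t x u (-1) 0 0 e2.
    rewrite ?Tx, ?Tu, ?Txx, ?Tux, ?Tuu, ?Tt, ?Xu, ?Xuu, ?Xux in e0, e1, e2.
    apply (mul_nz (A2 t x)); auto; lra. }
  assert (Eu : forall t x u, pd_u eta t x u = Fof eta t x).
  { intros t x u. unfold Fof.
    exact (const_fun (fun s => pd_u eta t x s) (ex_u eta (Du :: nil) Se t x) (Euu t x) u 0). }
  assert (Heta : forall t x u, eta t x u = Fof eta t x * u + Gof eta t x).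
  { intros t x u. unfold Gof.
    exact (lin_of_deriv (fun s => eta t x s) (Fof eta t x) (ex_u eta nil Se t x) (Eu t x) u). }
  assert (exF : forall t x, ex_derive (fun s => Fof eta t s) x).
  { intros. exact (ex_x eta (Du :: nil) Se t x 0). }
  assert (exG : forall t x, ex_derive (fun s => Gof eta t s) x).
  { intros. exact (ex_x eta nil Se t x 0). }
  assert (exFt : forall t x, ex_derive (fun s => Fof eta s x) t).
  { intros. exact (ex_t eta (Du :: nil) Se t x 0). }
  assert (exGt : forall t x, ex_derive (fun s => Gof eta s x) t).
  { intros. exact (ex_t eta nil Se t x 0). }
  assert (exFx : forall t x, ex_derive (fun s => pd_x2 (Fof eta) t s) x).
  { intros. exact (ex_x eta (Defs.Dx :: Du :: nil) Se t x 0). }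
  assert (exGx : forall t x, ex_derive (fun s => pd_x2 (Gof eta) t s) x).
  { intros. exact (ex_x eta (Defs.Dx :: nil) Se t x 0). }
  assert (Ex : forall t x u, pd_x eta t x u = pd_x2 (Fof eta) t x * u + pd_x2 (Gof eta) t x).
  { intros. unfold pd_x. rewrite (Derive_ext _ (fun s => Fof eta t s * u + Gof eta t s)).
    apply Derive_lin2; auto. intro; apply Heta. }
  assert (Et : forall t x u, pd_t eta t x u = pd_t2 (Fof eta) t x * u + pd_t2 (Gof eta) t x).
  { intros. unfold pd_t. rewrite (Derive_ext _ (fun s => Fof eta s x * u + Gof eta s x)).
    apply Derive_lin2; auto. intro; apply Heta. }
  assert (Eux : forall t x u, pd_u (pd_x eta) t x u = pd_x2 (Fof eta) t x).
  { intros. unfold pd_u. rewrite (Derive_ext _ (fun s => pd_x2 (Fof eta) t x * s + pd_x2 (Gof eta) t x)).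
    apply Derive_lin. intro; apply Ex. }
  assert (Exx : forall t x u, pd_x (pd_x eta) t x u =
     pd_x2 (pd_x2 (Fof eta)) t x * u + pd_x2 (pd_x2 (Gof eta)) t x).
  { intros. unfold pd_x at 1.
    rewrite (Derive_ext _ (fun s => pd_x2 (Fof eta) t s * u + pd_x2 (Gof eta) t s)).
    apply Derive_lin2; auto. intro; apply Ex. }
  set (T := Tof tau) in *. set (X := Xof xi) in *. set (F := Fof eta) in *. set (G := Gof eta) in *.
  assert (ST4 : forall t x,
     A2 t x * (2 * pd_x2 X t x - Derive T t) = T t * pd_t2 A2 t x + X t x * pd_x2 A2 t x /\
     F t x = pd_x2 X t x - Derive T t /\
     G t x - pd_t2 X t x - 2 * A2 t x * pd_x2 F t x + A2 t x * pd_x2 (pd_x2 X) t x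
       - A1 t x * Derive T t + A1 t x * pd_x2 X t x - T t * pd_t2 A1 t x - X t x * pd_x2 A1 t x = 0 /\
     pd_x2 F t x = 0 /\
     pd_t2 F t x + pd_x2 G t x - A2 t x * pd_x2 (pd_x2 F) t x - A1 t x * pd_x2 F t x = 0 /\
     pd_t2 G t x - A2 t x * pd_x2 (pd_x2 G) t x - A1 t x * pd_x2 G t x = 0).
  { intros t x.
    inst HE t x 0 0 0 0 e0. inst HE t x 0 0 0 1 e1. inst HE t x 0 1 0 0 e2.
    inst HE t x 1 1 0 0 e3. inst HE t x 1 0 0 0 e4. inst HE t x (-1) 0 0 0 e5.
    rewrite ?Tx, ?Tu, ?Txx, ?Tux, ?Tuu, ?Tt, ?Xu, ?Xuu, ?Xux, ?Xt, ?Xx, ?Xxx,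
       ?Euu, ?Eu, ?Eux, ?Exx, ?Ex, ?Et, ?Heta, ?Hxi, ?Htau in e0, e1, e2, e3, e4, e5.
    repeat split; lra. }
  assert (FxZ : forall t x, pd_x2 F t x = 0) by (intros; apply ST4).
  assert (HF : forall t x, F t x = F t 0).
  { intros t x. exact (const_fun (fun s => F t s) (exF t) (fun s => FxZ t s) x 0). }
  assert (Xx2 : forall t x, pd_x2 X t x = F t 0 + Derive T t).
  { intros t x. rewrite <- (HF t x). destruct (ST4 t x) as [_ [H2 _]]. lra. }
  assert (exX : forall t x, ex_derive (fun s => X t s) x).
  { intros. exact (ex_x xi nil Sx t x 0). }
  assert (HX : forall t x, X t x = (F t 0 + Derive T t) * x + X t 0).
  { intros t x. exact (lin_of_deriv (fun s => X t s) _ (exX t) (Xx2 t) x). }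
  assert (XxxZ : forall t x, pd_x2 (pd_x2 X) t x = 0).
  { intros. change (Derive (fun s => pd_x2 X t s) x = 0).
    rewrite (Derive_ext _ (fun _ => F t 0 + Derive T t)). apply Derive_const. intro; apply Xx2. }
  assert (Ft : forall t x, pd_t2 F t x = Derive (fun s => F s 0) t).
  { intros. unfold pd_t2. apply Derive_ext. intro; apply HF. }
  assert (FxxZ : forall t x, pd_x2 (pd_x2 F) t x = 0).
  { intros. change (Derive (fun s => pd_x2 F t s) x = 0).
    rewrite (Derive_ext _ (fun _ => 0)). apply Derive_const. intro; apply FxZ. }
  assert (Gx : forall t x, pd_x2 G t x = - Derive (fun s => F s 0) t).
  { intros t x. destruct (ST4 t x) as [_ [_ [_ [_ [H5 _]]]]].
    rewrite Ft, FxZ, FxxZ in H5. lra. }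
  assert (GxxZ : forall t x, pd_x2 (pd_x2 G) t x = 0).
  { intros. change (Derive (fun s => pd_x2 G t s) x = 0).
    rewrite (Derive_ext _ (fun _ => - Derive (fun s => F s 0) t)). apply Derive_const. intro; apply Gx. }
  assert (Gteq : forall t x, pd_t2 G t x + A1 t x * Derive (fun s => F s 0) t = 0).
  { intros t x. destruct (ST4 t x) as [_ [_ [_ [_ [_ H6]]]]].
    rewrite GxxZ, Gx in H6. lra. }
  assert (HG : forall t x, G t x = Derive (fun s => F s 0) t * (- x) + G t 0).
  { intros t x. rewrite (lin_of_deriv (fun s => G t s) _ (exG t) (Gx t) x). ring. }
  assert (exf' : forall t, ex_derive (Derive (fun s => F s 0)) t).
  { intros. exact (ex_t eta (Dt :: Du :: nil) Se t 0 0). }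
  assert (exh : forall t, ex_derive (fun s => G s 0) t).
  { intros. exact (exGt t 0). }
  assert (Gt : forall t x, pd_t2 G t x =
     Derive (Derive (fun s => F s 0)) t * (- x) + Derive (fun s => G s 0) t).
  { intros. unfold pd_t2.
    rewrite (Derive_ext _ (fun s => Derive (fun s => F s 0) s * (- x) + G s 0)).
    apply Derive_lin2; auto. intro; apply HG. }
  assert (fpZ : forall t, Derive (fun s => F s 0) t = 0).
  { intro t. destruct (Req_dec (Derive (fun s => F s 0) t) 0) as [Hz|Hnz]; auto.
    exfalso.
    assert (HA : forall s, A1 t s = (Derive (Derive (fun s => F s 0)) t * s - Derive (fun s => G s 0) t)
                                     / Derive (fun s => F s 0) t).
    { intro s. pose proof (Gteq t s) as K. rewrite Gt in K. field_simplify; auto.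
      apply (Rmult_eq_reg_r (Derive (fun s => F s 0) t)); auto.
      field_simplify; auto. lra. }
    assert (HA' : forall s, pd_x2 A1 t s = Derive (Derive (fun s => F s 0)) t / Derive (fun s => F s 0) t).
    { intro s. unfold pd_x2.
      rewrite (Derive_ext _ (fun s' => (Derive (Derive (fun s => F s 0)) t * s' - Derive (fun s => G s 0) t)
                                     / Derive (fun s => F s 0) t)).
      apply is_derive_unique. auto_derive; auto. field; auto.
      intro; apply HA. }
    apply (HA1 t 0). change (Derive (fun s => pd_x2 A1 t s) 0 = 0).
    rewrite (Derive_ext _ (fun _ => Derive (Derive (fun s => F s 0)) t / Derive (fun s => F s 0) t)).
    apply Derive_const. intro; apply HA'. }
  assert (falpha : forall t, F t 0 = F 0 0).
  { intro t. exact (const_fun (fun s => F s 0) (fun s => exFt s 0) fpZ t 0). }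
  assert (f''Z : forall t, Derive (Derive (fun s => F s 0)) t = 0).
  { intro t. rewrite (Derive_ext _ (fun _ => 0)). apply Derive_const. intro; apply fpZ. }
  assert (DhZ : forall t, Derive (fun s => G s 0) t = 0).
  { intro t. pose proof (Gteq t 0) as K. rewrite Gt, f''Z, fpZ in K. lra. }
  assert (hbeta : forall t, G t 0 = G 0 0).
  { intro t. exact (const_fun (fun s => G s 0) exh DhZ t 0). }
  assert (HTs : smooth1 T) by exact (smooth1_of3 tau St).
  assert (exD : forall t, ex_derive (fun s => Derive T s + F 0 0) t).
  { intro t. auto_derive. apply smooth1_ex, smooth1_D; auto. }
  assert (DD : forall t, Derive (fun s => Derive T s + F 0 0) t = Derive (Derive T) t).
  { intro t. apply is_derive_unique. auto_derive.
    apply smooth1_ex, smooth1_D; auto. change (fun x => Derive T x) with (Derive T). ring. }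
  assert (exchi : forall t, ex_derive (fun s => X s 0) t).
  { intros. exact (ex_t xi nil Sx t 0 0). }
  assert (Xt2 : forall t x, pd_t2 X t x = Derive (Derive T) t * x + Derive (fun s => X s 0) t).
  { intros t x. unfold pd_t2.
    rewrite (Derive_ext _ (fun s => (Derive T s + F 0 0) * x + X s 0)).
    rewrite Derive_lin2; auto. rewrite DD. reflexivity.
    intro s. rewrite (HX s x), (falpha s). ring. }
  exists (F 0 0), (G 0 0), T, (fun s => X s 0).
  split; [exact HTs|].
  split; [exact (smooth1_of3 xi Sx)|].
  split; [|split].
  - intros t x u. rewrite Htau, Hxi, Heta, (HX t x), (HF t x), (falpha t), (HG t x), fpZ, hbeta.
    split; [reflexivity|split; ring].
  - intros t x. destruct (ST4 t x) as [H1 _].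
    rewrite Xx2, (falpha t) in H1. rewrite (HX t x), (falpha t) in H1. lra.
  - intros t x. destruct (ST4 t x) as [_ [_ [H3 _]]].
    rewrite Xt2, XxxZ, FxZ, Xx2, (falpha t), (HG t x), fpZ, (hbeta t) in H3.
    rewrite (HX t x), (falpha t) in H3. lra.
Qed.

Theorem proposition19 (A1 A2 : R -> R -> R) :
  in_class_L1hat A1 A2 ->
  forall tau xi eta : R -> R -> R -> R,
    in_max_Lie_inv_alg A1 A2 tau xi eta <->
    exists (alpha beta : R) (T chi : R -> R),
      smooth1 T /\ smooth1 chi /\
      (forall t x u,
          tau t x u = T t /\
          xi t x u = Derive T t * x + alpha * x + chi t /\
          eta t x u = alpha * u + beta) /\
      (forall t x,
          T t * pd_t2 A2 t x + ((Derive T t + alpha) * x + chi t) * pd_x2 A2 t x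
          = (Derive T t + 2 * alpha) * A2 t x) /\
      (forall t x,
          T t * pd_t2 A1 t x + ((Derive T t + alpha) * x + chi t) * pd_x2 A1 t x
          = alpha * A1 t x - Derive (Derive T) t * x - Derive chi t + beta).
Proof.
  intros Hc tau xi eta. split.
  - apply forward; auto.
  - intros [alpha [beta [T [chi [HT [Hch [Hf [E2 E1]]]]]]]].
    assert (Et : tau = aff T (fun _ => 0) 0).
    { do 3 (apply functional_extensionality; intro). unfold aff.
      rewrite (proj1 (Hf _ _ _)). ring. }
    assert (Ex : xi = aff chi (fun t => Derive T t + alpha) 0).
    { do 3 (apply functional_extensionality; intro). unfold aff.
      rewrite (proj1 (proj2 (Hf _ _ _))). ring. }
    assert (Ee : eta = aff (fun _ => beta) (fun _ => 0) alpha).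
    { do 3 (apply functional_extensionality; intro). unfold aff.
      rewrite (proj2 (proj2 (Hf _ _ _))). ring. }
    subst tau xi eta. apply reverse_dir; auto.
Qed.
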